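(* For every finite graph $G$: (1) $\widetilde{\omega}(G) \leq \widetilde{\Delta}(G)$, unless $\widetilde{G}$ is edgeless (in which case $\widetilde{\omega}(G) \leq 1$ and $\widetilde{\Delta}(G) = 0$); (2) $\mathsf{cideg}(G) \leq 3^{\lceil \widetilde{\Delta}(G)/3\rceil}$; (3) $\widetilde{\Delta}(G) \leq \mathsf{cideg}(G) \cdot (\widetilde{\omega}(G) - 1)$.
   Context: Two vertices of $G$ are equivalent if they lie in exactly the same maximal cliques of $G$. The clique-quotient graph $\widetilde{G}$ has the equivalence classes as vertices, two distinct classes adjacent iff their representatives are adjacent in $G$. $\widetilde{\Delta}(G)$ is the maximum degree of $\widetilde{G}$. $\widetilde{\omega}(G)$ is the maximum over maximal cliques $K$ of the number of equivalence classes meeting $K$; $\mathsf{cideg}(G)$ is the maximum over vertices $v$ of the number of maximal cliques of $G$ containing $v$. *)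

(* Defs.v *)
(* A finite simple graph is a symmetric irreflexive
   relation e on a finType T. *)
From mathcomp Require Import all_boot.
Set Implicit Arguments. Unset Strict Implicit. Unset Printing Implicit Defensive.

Section CliqueQuotient.
Variables (T : finType) (e : rel T).

Definition clique (K : {set T}) : bool :=
  [forall x in K, forall y in K, (x != y) ==> e x y].

Definition maxclique (K : {set T}) : bool := maxset clique K.

Definition maxcliques : {set {set T}} := [set K | maxclique K].

Definition cq_equiv (u v : T) : bool :=
  [forall K in maxcliques, (u \in K) == (v \in K)].

Definition cq_class (v : T) : {set T} := [set u | cq_equiv u v].

(* degree of the class of v in the clique-quotient graph: number of classes
   distinct from the class of v containing a neighbour of v *)
Definition cq_deg (v : T) : nat :=
  #|[set cq_class w | w in [set w | e v w & cq_class w != cq_class v]]|.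

Definition cq_Delta : nat := \max_(v : T) cq_deg v.

Definition cq_omega : nat :=
  \max_(K in maxcliques) #|[set cq_class v | v in K]|.

Definition cideg : nat :=
  \max_(v : T) #|[set K in maxcliques | v \in K]|.

Definition cq_edgeless : Prop :=
  forall v w : T, e v w -> cq_class v = cq_class w.

End CliqueQuotient.

(* Main.v *)
Require Import Defs.
From mathcomp Require Import all_boot zify.
Set Implicit Arguments. Unset Strict Implicit. Unset Printing Implicit Defensive.

Lemma card_bigcup_le (I U : finType) (P : pred I) (F : I -> {set U}) :
  #|\bigcup_(i | P i) F i| <= \sum_(i | P i) #|F i|.
Proof.
pose K := fun (S : {set U}) (n : nat) => is_true (#|S| <= n).
apply: (@big_rec2 _ _ K); first by rewrite /K cards0.
move=> i S n _; rewrite /K => IH; rewrite (leq_trans (leq_card_setU _ _)) // leq_add2l //.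
Qed.

Lemma cube_le_exp3 k : k ^ 3 <= 3 ^ k.
Proof.
elim: k => [//|k IH].
case: (ltnP k 3) => hk.
  by case: k hk IH => [|[|[|]]].
rewrite [3 ^ k.+1]expnS; apply: (@leq_trans (3 * k ^ 3)); last by rewrite leq_pmul2l.
have -> : k.+1 ^ 3 = k.+1 * k.+1 * k.+1 by rewrite !expnS expn0 muln1 mulnA.
have -> : k ^ 3 = k * k * k by rewrite !expnS expn0 muln1 mulnA.
nia.
Qed.

Section Gen.
Variables (U : finType) (r : rel U).
Hypothesis r_sym : symmetric r.

Definition mcl (A X : {set U}) : bool :=
  [&& X \subset A, clique r X &
    [forall Y : {set U}, [&& Y \subset A, clique r Y & X \subset Y] ==> (Y == X)]].

Definition MC (A : {set U}) := [set X | mcl A X].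

Lemma cliqueP (X : {set U}) : reflect (forall x y, x \in X -> y \in X -> x != y -> r x y) (clique r X).
Proof.
apply: (iffP forallP) => [H x y hx hy nxy | H x].
  by move: (H x); rewrite hx /= => /forallP /(_ y); rewrite hy nxy.
by apply/implyP => hx; apply/forallP => y; apply/implyP => hy; apply/implyP; apply: H.
Qed.

Lemma mclP (A X : {set U}) : reflect [/\ X \subset A, clique r X &
   forall Y : {set U}, Y \subset A -> clique r Y -> X \subset Y -> Y = X] (mcl A X).
Proof.
apply: (iffP and3P) => [[h1 h2 /forallP h3] | [h1 h2 h3]]; split => //.
  by move=> Y a b c; apply/eqP; move: (h3 Y); rewrite a b c.
by apply/forallP => Y; apply/implyP => /and3P [a b c]; rewrite (h3 Y a b c).
Qed.

Lemma clique_sub (X Y : {set U}) : X \subset Y -> clique r Y -> clique r X.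
Proof.
move=> /subsetP s /cliqueP h; apply/cliqueP => x y hx hy; apply: h; exact: s.
Qed.

Lemma clique_add u (X : {set U}) : (forall x, x \in X -> x != u -> r u x) -> clique r X ->
  clique r (u |: X).
Proof.
move=> hu /cliqueP h; apply/cliqueP => x y /setU1P [->|hx] /setU1P [->|hy] nxy.
- by rewrite eqxx in nxy.
- by apply: hu => //; rewrite eq_sym.
- by rewrite r_sym; apply: hu.
- exact: h.
Qed.

Definition Nb (A : {set U}) u := [set w in A | (w == u) || ~~ r u w].
Definition Ad (A : {set U}) u := [set w in A | (w != u) && r u w].

Lemma card_Nb_Ad (A : {set U}) u : #|A| = #|Nb A u| + #|Ad A u|.
Proof.
rewrite -(cardsID [set w | (w == u) || ~~ r u w] A).
congr (_ + _); apply: eq_card => w; rewrite !inE //.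
by rewrite negb_or negbK andbC.
Qed.

Lemma MC_step (A X : {set U}) u : mcl A X -> u \in X -> mcl (Ad A u) (X :\ u).
Proof.
move=> /mclP [sXA cX mX] uX; apply/mclP; split.
- apply/subsetP => w; rewrite !inE => /andP [nwu wX].
  rewrite (subsetP sXA) // nwu /=.
  by move/cliqueP: cX; apply => //; rewrite eq_sym.
- by apply: clique_sub cX; apply: subsetDl.
- move=> Y sYA cY sXY.
  have uA : u \in A by apply: (subsetP sXA).
  have e1 : u |: Y = X.
    apply: mX.
    + apply/subsetP => w /setU1P [->//|/(subsetP sYA)]; rewrite inE; by case/andP.
    + apply: clique_add cY => x /(subsetP sYA); rewrite inE => /and3P [] //.
    + by rewrite -{1}(setD1K uX) setUS.
  have uY : u \notin Y.
    by apply/negP => /(subsetP sYA); rewrite inE eqxx /= andbF.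
  by rewrite -e1 setU1K.
Qed.

Lemma MC_meet (A X : {set U}) v : v \in A -> mcl A X -> exists2 u, u \in Nb A v & u \in X.
Proof.
move=> vA /mclP [sXA cX mX].
case: (boolP [exists u in X, u \in Nb A v]) => [/exists_inP [u uX uN]|].
  by exists u.
move=> /exists_inPn hX.
have e1 : v |: X = X.
  apply: mX => //.
  - by rewrite subUset sub1set vA.
  - apply: clique_add cX => x xX nxv.
    move: (hX x xX); rewrite inE (subsetP sXA) //= negb_or negbK.
    by case/andP.
  - exact: subsetUr.
exfalso; move: (hX v); rewrite inE vA eqxx /=.
by rewrite -e1 setU11 => /(_ isT).
Qed.

Lemma MC_bound n (A : {set U}) : #|A| <= n -> #|MC A| ^ 3 <= 3 ^ #|A|.
Proof.
elim: n A => [|n IH] A hA.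
  move: hA; rewrite leqn0 cards_eq0 => /eqP ->; rewrite cards0.
  have : MC set0 \subset [set set0].
    apply/subsetP => X; rewrite !inE => /mclP [s _ _]; by rewrite -subset0.
  move/subset_leq_card; rewrite cards1.
  by case: #|MC set0| => [|[|]].
case: (set_0Vmem A) => [->|[a aA]].
  have : MC set0 \subset [set set0].
    apply/subsetP => X; rewrite !inE => /mclP [s _ _]; by rewrite -subset0.
  move/subset_leq_card; rewrite cards1 cards0.
  by case: #|MC set0| => [|[|]].
pose v := [arg min_(u < a in A) #|Nb A u|].
have [vA minv] : v \in A /\ forall u, u \in A -> #|Nb A v| <= #|Nb A u|.
  by rewrite /v; case: arg_minnP => // w wA H; split.
set d := #|Nb A v|.
have d_gt0 : 0 < d by apply/card_gt0P; exists v; rewrite inE vA eqxx.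
have sub1 : MC A \subset \bigcup_(u in Nb A v) [set X in MC A | u \in X].
  apply/subsetP => X XA; have XA' := XA; rewrite inE in XA'.
  have [u uN uX] := MC_meet vA XA'.
  by apply/bigcupP; exists u => //; rewrite inE XA uX.
have bu : forall u, u \in Nb A v -> #|[set X in MC A | u \in X]| <= #|MC (Ad A u)|.
  move=> u _.
  rewrite -(@card_in_imset _ _ (fun X => X :\ u)).
    apply: subset_leq_card; apply/subsetP => Y /imsetP [X].
    by rewrite !inE => /andP [hX uX] ->; apply: MC_step.
  move=> X1 X2; rewrite !inE => /andP [_ u1] /andP [_ u2] eq12.
  by rewrite -(setD1K u1) -(setD1K u2) eq12.
pose m := [arg max_(u > v in Nb A v) #|MC (Ad A u)|].
have [mN maxm] : m \in Nb A v /\ forall u, u \in Nb A v -> #|MC (Ad A u)| <= #|MC (Ad A m)|.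
  rewrite /m; case: arg_maxnP; first by rewrite inE vA eqxx.
  by move=> w wA H; split.
have hsum : #|MC A| <= d * #|MC (Ad A m)|.
  apply: (leq_trans (subset_leq_card sub1)).
  apply: (leq_trans (card_bigcup_le _ _)).
  apply: (@leq_trans (\sum_(u in Nb A v) #|MC (Ad A m)|)).
    by apply: leq_sum => u uN; apply: (leq_trans (bu u uN)); apply: maxm.
  by rewrite sum_nat_const.
have hAm : #|Ad A m| + d <= #|A|.
  have mA : m \in A by move: mN; rewrite inE => /andP [].
  by rewrite (card_Nb_Ad A m) addnC leq_add2r minv.
have IHm : #|MC (Ad A m)| ^ 3 <= 3 ^ #|Ad A m|.
  apply: IH; rewrite -ltnS; apply: leq_trans hA.
  by apply: leq_trans hAm; rewrite -addn1 leq_add2l.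
apply: (@leq_trans ((d * #|MC (Ad A m)|) ^ 3)).
  by rewrite leq_exp2r.
rewrite expnMn; apply: (@leq_trans (3 ^ d * 3 ^ #|Ad A m|)).
  by apply: leq_mul => //; apply: cube_le_exp3.
by rewrite -expnD leq_exp2l // addnC.
Qed.
End Gen.
Section G.
Variables (T : finType) (e : rel T).
Hypotheses (e_sym : symmetric e) (e_irr : irreflexive e).

Lemma inMC K : (K \in maxcliques e) = maxclique e K.
Proof. by rewrite inE. Qed.

Lemma equivP u v : reflect (forall K, maxclique e K -> (u \in K) = (v \in K)) (cq_equiv e u v).
Proof.
apply: (iffP forall_inP) => [H K mK | H K].
  by apply/eqP; apply: H; rewrite inMC.
by rewrite inMC => mK; apply/eqP; apply: H.
Qed.

Lemma eqv_refl u : cq_equiv e u u.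
Proof. by apply/equivP. Qed.

Lemma eqv_sym u v : cq_equiv e u v -> cq_equiv e v u.
Proof. by move/equivP => H; apply/equivP => K mK; rewrite H. Qed.

Lemma eqv_trans u v w : cq_equiv e u v -> cq_equiv e v w -> cq_equiv e u w.
Proof. by move/equivP => H1 /equivP H2; apply/equivP => K mK; rewrite H1 // H2. Qed.

Lemma in_class u v : (u \in cq_class e v) = cq_equiv e u v.
Proof. by rewrite inE. Qed.

Lemma class_eqP u v : reflect (cq_class e u = cq_class e v) (cq_equiv e u v).
Proof.
apply: (iffP idP) => [H | H].
  apply/setP => w; rewrite !in_class; apply/idP/idP => h.
    exact: eqv_trans h H.
  exact: eqv_trans h (eqv_sym H).
by rewrite -in_class -H in_class eqv_refl.
Qed.

Lemma ex_max (C : {set T}) : clique e C -> exists2 K, maxclique e K & C \subset K.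
Proof. by move=> cC; case: (maxset_exists cC) => K mK sCK; exists K. Qed.

Lemma clique1 u : clique e [set u].
Proof. by apply/cliqueP => x y; rewrite !inE => /eqP -> /eqP ->; rewrite eqxx. Qed.

Lemma clique2 u w : e u w -> clique e [set u; w].
Proof.
move=> euw; apply/cliqueP => x y; rewrite !inE => /orP [] /eqP -> /orP [] /eqP -> //;
  rewrite ?eqxx // => _; by rewrite e_sym.
Qed.

Lemma F3 u v : cq_equiv e u v -> u != v -> e u v.
Proof.
move/equivP => H nuv.
have [K mK sK] := ex_max (clique1 u).
have uK : u \in K by rewrite (subsetP sK) // inE.
have vK : v \in K by rewrite -(H K mK).
by move/maxsetp/cliqueP: mK; apply.
Qed.

Lemma F4 u v w : cq_equiv e u v -> e u w -> w != v -> e v w.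
Proof.
move/equivP => H euw nwv.
have [K mK sK] := ex_max (clique2 euw).
have uK : u \in K by rewrite (subsetP sK) // !inE eqxx.
have wK : w \in K by rewrite (subsetP sK) // !inE eqxx orbT.
have vK : v \in K by rewrite -(H K mK).
by move/maxsetp/cliqueP: mK; apply => //; rewrite eq_sym.
Qed.

Lemma F5 K u w : maxclique e K -> u \in K -> cq_equiv e w u -> w \in K.
Proof. by move=> mK uK /equivP H; rewrite (H K mK). Qed.

Lemma lift_adj a b w y : cq_equiv e a w -> cq_equiv e b y -> e a b ->
  cq_class e w != cq_class e y -> e w y.
Proof.
move=> aw bw eab nwy.
have nwb : b != w.
  apply: contraNneq nwy => ebw; apply/eqP/class_eqP; by rewrite -ebw.
have ewb : e w b by apply: F4 aw eab nwb.
have nwy' : w != y by apply: contraNneq nwy => ->.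
by rewrite e_sym; apply: F4 bw _ nwy'; rewrite e_sym.
Qed.


Definition qr : rel {set T} :=
  fun C D => (C != D) && [exists x in C, exists y in D, e x y].

Lemma qr_sym : symmetric qr.
Proof.
move=> C D; rewrite /qr eq_sym; congr (_ && _).
apply/exists_inP/exists_inP => [] [x xC /exists_inP [y yD exy]];
  exists y => //; apply/exists_inP; exists x => //; by rewrite e_sym.
Qed.

Definition nbset v := [set w | e v w & cq_class e w != cq_class e v].
Definition Av v := [set cq_class e w | w in nbset v].
Definition phi v (K : {set T}) := [set cq_class e w | w in K] :\ cq_class e v.

Lemma cliqueE K x y : clique e K -> x \in K -> y \in K -> x != y -> e x y.
Proof. by move/cliqueP; apply. Qed.

Lemma phi_mcl v K : maxclique e K -> v \in K -> mcl qr (Av v) (phi v K).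
Proof.
move=> mK vK; have cK := maxsetp mK.
apply/mclP; split.
- apply/subsetP => C /setD1P [nC /imsetP [w wK eC]]; subst C.
  apply: imset_f; rewrite inE nC andbT.
  apply: (cliqueE cK vK wK); apply: contraNneq nC => ->; by [].
- apply/cliqueP => C D /setD1P [_ /imsetP [y yK ->]] /setD1P [_ /imsetP [z zK ->]] nCD.
  rewrite /qr nCD /=; apply/exists_inP; exists y; first by rewrite in_class eqv_refl.
  apply/exists_inP; exists z; first by rewrite in_class eqv_refl.
  by apply: (cliqueE cK yK zK); apply: contraNneq nCD => ->.
- move=> Y sYA cY sPY; apply/eqP; rewrite eqEsubset sPY andbT.
  apply/subsetP => C CY.
  have /imsetP [w] := subsetP sYA C CY; rewrite inE => /andP [evw nwv] eC; subst C.
  have wK : w \in K.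
    have <- : w |: K = K.
      apply: (maxsetsup mK); last exact: subsetUr.
      apply: (clique_add e_sym) cK => x xK nxw.
      case: (eqVneq (cq_class e x) (cq_class e v)) => [/class_eqP exv | nxv].
        by rewrite e_sym; apply: (F4 (eqv_sym exv) evw); rewrite eq_sym.
      case: (eqVneq (cq_class e x) (cq_class e w)) => [/class_eqP exw | nxw'].
        by rewrite e_sym; apply: F3.
      have xY : cq_class e x \in Y.
        by apply: (subsetP sPY); rewrite !inE nxv; apply: imset_f.
      have hq : qr (cq_class e w) (cq_class e x).
        by move/cliqueP: cY; apply => //; rewrite eq_sym.
      move: hq; case/andP => _ /exists_inP [a aw /exists_inP [b bx eab]].
      rewrite in_class in aw; rewrite in_class in bx.
      by apply: (lift_adj aw bx eab); rewrite eq_sym.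
    exact: setU11.
  by rewrite !inE nwv; apply: imset_f.
Qed.

Lemma phi_sub v K1 K2 : maxclique e K2 -> v \in K2 ->
  phi v K1 \subset phi v K2 -> K1 \subset K2.
Proof.
move=> mK2 vK2 s; apply/subsetP => y yK1.
case: (eqVneq (cq_class e y) (cq_class e v)) => [/class_eqP eyv | nyv].
  exact: F5 mK2 vK2 eyv.
have : cq_class e y \in phi v K2 by apply: (subsetP s); apply/setD1P; split => //; exact: imset_f.
case/setD1P => _ /imsetP [z zK2 /class_eqP eyz].
exact: F5 mK2 zK2 eyz.
Qed.

Definition Sv v := [set K in maxcliques e | v \in K].

Lemma deg_bound v : #|Sv v| <= #|MC qr (Av v)|.
Proof.
have inj : {in Sv v &, injective (phi v)}.
  move=> K1 K2; rewrite !inE => /andP [m1 v1] /andP [m2 v2] eq12.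
  apply/eqP; rewrite eqEsubset.
  by rewrite (phi_sub m2 v2) ?eq12 // (phi_sub m1 v1) ?eq12.
rewrite -(card_in_imset inj); apply: subset_leq_card; apply/subsetP => X /imsetP [K].
by rewrite !inE => /andP [mK vK] ->; apply: phi_mcl.
Qed.

End G.

Theorem lemma3p4 (T : finType) (e : rel T)
    (e_sym : symmetric e) (e_irr : irreflexive e) :
  [/\ (~ cq_edgeless e -> cq_omega e <= cq_Delta e),
      (cq_edgeless e -> cq_omega e <= 1 /\ cq_Delta e = 0),
      cideg e <= 3 ^ ((cq_Delta e + 2) %/ 3)
    & cq_Delta e <= cideg e * (cq_omega e - 1)].
Proof.
have degD v : cq_deg e v <= cq_Delta e by rewrite /cq_Delta; apply: (@leq_bigmax T (cq_deg e) v).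
have degA v : cq_deg e v = #|Av e v| by [].
split.
-
  move=> nE.
  have D1 : 0 < cq_Delta e.
    case: (boolP [exists v, exists w, e v w && (cq_class e v != cq_class e w)]).
      case/existsP => v /existsP [w /andP [evw nvw]].
      apply: leq_trans (degD v); rewrite degA; apply/card_gt0P; exists (cq_class e w).
      by apply: imset_f; rewrite inE evw eq_sym nvw.
    move=> /existsPn H; exfalso; apply: nE => v w evw.
    move: (H v) => /existsPn /(_ w); rewrite evw /= negbK => /eqP //.
  apply/bigmax_leqP => K; rewrite inMC => mK; have cK := maxsetp mK.
  case: (boolP [exists x in K, exists w, e x w && (w \notin K)]).
    case/exists_inP => x xK /existsP [w /andP [exw wK]].
    have nwx : cq_class e w != cq_class e x.
      apply: contra wK => /eqP /class_eqP h; exact: F5 mK xK h.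
    have wphi : cq_class e w \notin phi e x K.
      apply/negP => /setD1P [_ /imsetP [z zK /class_eqP h]]; move/negP: wK; apply.
      exact: F5 mK zK h.
    apply: leq_trans (degD x); rewrite degA.
    have -> : #|[set cq_class e y | y in K]| = #|cq_class e w |: phi e x K|.
      by rewrite cardsU1 wphi (cardsD1 (cq_class e x)) imset_f.
    apply: subset_leq_card; apply/subsetP => C /setU1P [->|].
      by apply: imset_f; rewrite inE exw nwx.
    case/setD1P => nC /imsetP [z zK eC]; subst C.
    apply: imset_f; rewrite inE nC andbT; apply: (cliqueE cK xK zK).
    by apply: contraNneq nC => ->.
  move=> /exists_inPn H.
  apply: (leq_trans _ D1).
  case: (set_0Vmem K) => [->|[x xK]]; first by rewrite imset0 cards0.
  have key z K' : z \in K -> maxclique e K' -> z \in K' -> K = K'.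
    move=> zK mK' zK'; apply: (@maxsetsup _ (clique e) K' K mK' cK).
    apply/subsetP => y yK'; case: (eqVneq y z) => [->//|nyz].
    have ezy : e z y by apply: (cliqueE (maxsetp mK') zK' yK'); rewrite eq_sym.
    move: (H z zK) => /existsPn /(_ y); rewrite ezy /= negbK //.
  rewrite -(cards1 (cq_class e x)); apply: subset_leq_card.
  apply/subsetP => C /imsetP [y yK ->]; rewrite inE; apply/eqP/class_eqP.
  apply/equivP => K' mK'; apply/idP/idP => h.
    by rewrite -(key y K' yK mK' h).
  by rewrite -(key x K' xK mK' h).
-
  move=> E; split.
    apply/bigmax_leqP => K; rewrite inMC => mK; have cK := maxsetp mK.
    case: (set_0Vmem K) => [->|[x xK]]; first by rewrite imset0 cards0.
    rewrite -(cards1 (cq_class e x)); apply: subset_leq_card.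
    apply/subsetP => C /imsetP [y yK ->]; rewrite inE.
    case: (eqVneq y x) => [->//|nyx].
    by rewrite (E x y) // (cliqueE cK xK yK) // eq_sym.
  apply/eqP; rewrite -leqn0; apply/bigmax_leqP => v _.
  rewrite leqn0 cards_eq0; apply/eqP/setP => C; rewrite inE.
  apply/negbTE/negP => /imsetP [w]; rewrite inE => /andP [evw ncl] _.
  by rewrite (E v w evw) eqxx in ncl.
-
  apply/bigmax_leqP => v _.
  set q := (cq_Delta e + 2) %/ 3.
  have h1 : #|Sv e v| ^ 3 <= 3 ^ cq_Delta e.
    apply: leq_trans (_ : #|MC (qr e) (Av e v)| ^ 3 <= _).
      by rewrite leq_exp2r // deg_bound.
    apply: leq_trans (MC_bound (qr_sym e_sym) (leqnn _)) _.
    by rewrite leq_exp2l // -degA.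
  have h2 : 3 ^ cq_Delta e <= (3 ^ q) ^ 3.
    by rewrite -expnM leq_exp2l // /q; lia.
  have : #|Sv e v| ^ 3 <= (3 ^ q) ^ 3 := leq_trans h1 h2.
  by rewrite leq_exp2r.
-
  apply/bigmax_leqP => v _; rewrite degA.
  have s : Av e v \subset \bigcup_(K in Sv e v) phi e v K.
    apply/subsetP => C /imsetP [w]; rewrite inE => /andP [evw nwv] ->.
    have [K mK sK] := ex_max (clique2 e_sym evw).
    apply/bigcupP; exists K.
      by rewrite !inE mK (subsetP sK) // !inE eqxx.
    apply/setD1P; split => //; apply: imset_f.
    by rewrite (subsetP sK) // !inE eqxx orbT.
  apply: leq_trans (subset_leq_card s) _.
  apply: leq_trans (card_bigcup_le _ _) _.
  apply: (@leq_trans (\sum_(K in Sv e v) (cq_omega e - 1))).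
    apply: leq_sum => K; rewrite !inE => /andP [mK vK].
    have := cardsD1 (cq_class e v) [set cq_class e w | w in K].
    rewrite imset_f // add1n => hc.
    have : #|[set cq_class e w | w in K]| <= cq_omega e.
      rewrite /cq_omega.
      by apply: (@leq_bigmax_cond _ (fun K => K \in maxcliques e) (fun K => #|[set cq_class e w | w in K]|) K); rewrite inMC.
    rewrite hc /phi; lia.
  rewrite sum_nat_const leq_mul2r; apply/orP; right.
  rewrite /cideg.
  exact: (@leq_bigmax T (fun v => #|[set K in maxcliques e | v \in K]|) v).
Qed.
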